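(* Let $G$ be a finite simple graph. Define recursively: $G_1=G$; for $i\ge 1$, if $G_i$ is nonempty, let $F_i$ be an induced linear forest of $G_i$ of maximum order, chosen among all maximum-order induced linear forests of $G_i$ to have the minimum number of edges, and let $G_{i+1}=G\setminus\bigcup_{j=1}^{i}V(F_j)$ (the subgraph induced on the remaining vertices). Stop when all vertices are used, obtaining a partition $V(G)=V(F_1)\cup\cdots\cup V(F_k)$. Then for every $i\ge 2$, every $v\in V(F_i)$ and every $j<i$, the vertex $v$ has at least $2$ neighbors in $V(F_j)$.
   Context: A linear forest is a forest each of whose connected components is a path (a single vertex counts as a path). An induced linear forest of a graph $H$ is an induced subgraph of $H$ that is a linear forest; its order is its number of vertices and its size is its number of edges. *)

(* Defs.v *)
(* A finite simple graph = symmetric irreflexive rel on a finType. *)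
From mathcomp Require Import all_boot.
Set Implicit Arguments. Unset Strict Implicit. Unset Printing Implicit Defensive.

Section Graphs.
Variables (T : finType) (e : rel T).

Definition induced_rel (S : {set T}) : rel T :=
  [rel x y | [&& x \in S, y \in S & e x y]].

Definition component (S : {set T}) (x : T) : {set T} :=
  [set y in S | connect (induced_rel S) x y].

Definition consec (s : seq T) (x y : T) : bool :=
  has (fun p => (p == (x, y)) || (p == (y, x))) (zip s (behead s)).

Definition is_path_graph (C : {set T}) : Prop :=
  exists s : seq T, [/\ uniq s, (forall x, (x \in s) = (x \in C)) &
    (forall x y, x \in C -> y \in C -> e x y = consec s x y)].

Definition induced_linear_forest (S : {set T}) : Prop :=
  forall x, x \in S -> is_path_graph (component S x).

Definition n_edges (S : {set T}) : nat :=
  #|[set A : {set T} | [exists x, exists y,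
       (A == [set x; y]) && [&& x \in S, y \in S & e x y]]]|.

Definition remaining (Fs : seq {set T}) (i : nat) : {set T} :=
  ~: \bigcup_(F <- take i Fs) F.

Definition good_choice (R F : {set T}) : Prop :=
  [/\ F \subset R, induced_linear_forest F &
    forall L : {set T}, L \subset R -> induced_linear_forest L ->
      #|L| <= #|F| /\ (#|L| = #|F| -> n_edges F <= n_edges L)].

Definition greedy_partition (Fs : seq {set T}) : Prop :=
  [/\ forall i, i < size Fs ->
        remaining Fs i != set0 /\ good_choice (remaining Fs i) (nth set0 Fs i)
    & remaining Fs (size Fs) = set0].

End Graphs.

(* Main.v *)
Require Import Defs.
From mathcomp Require Import all_boot zify.
Set Implicit Arguments. Unset Strict Implicit. Unset Printing Implicit Defensive.
Lemma consec_cons (T : finType) (a : T) t x y :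
  consec (a :: t) x y = (if t is b :: _ then ((a, b) == (x, y)) || ((a, b) == (y, x)) else false) || consec t x y.
Proof. by case: t => [|b t] //. Qed.

Lemma consecE (T : finType) (s : seq T) x y : uniq s ->
  consec s x y = [&& x \in s, y \in s & (index y s == (index x s).+1) || (index x s == (index y s).+1)].
Proof.
elim: s => [|a t IH] //= /andP[nat ut]; rewrite consec_cons IH //.
case: t nat ut IH => [|b t] nat ut _.
  rewrite !inE; case: (x =P a) => [->|xa]; case: (y =P a) => [->|ya] //=.
  by rewrite eqxx.
have ba : b != a by apply: contra nat => /eqP->; rewrite inE eqxx.
have bt : b \notin t by case/andP: ut.
have nat' : a \notin t by apply: contra nat; rewrite inE => ->; rewrite orbT.
rewrite !inE !xpair_eqE /=.
case: (x =P a) => [->|/eqP xa]; [case: (y =P a) => [->|/eqP ya]; [|case: (y =P b) => [->|/eqP yb]] | case: (x =P b) => [->|/eqP xb]; [case: (y =P a) => [->|/eqP ya]; [|case: (y =P b)=> [->|/eqP yb]] | case: (y =P a) => [->|/eqP ya]; [|case: (y =P b)=> [->|/eqP yb]]]].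
all: rewrite /= ?eqxx ?(eq_sym a x) ?(eq_sym a y) ?(eq_sym b x) ?(eq_sym b y) ?(eq_sym a b) ?(negbTE xa) ?(negbTE ya) ?(negbTE xb) ?(negbTE yb) ?(negbTE ba) ?(negbTE nat') /= ?(negbTE bt) ?andbF /= ?orbF ?andbT //.
Qed.

Lemma ir_sym (T : finType) (e : rel T) S : symmetric e -> symmetric (induced_rel e S).
Proof. by move=> es x y; rewrite /induced_rel /= es; case: (x \in S); case: (y \in S). Qed.

Lemma path_in (T : finType) (e : rel T) (S S' : {set T}) x p :
  (forall w z, w \in S -> z \in S' -> e w z -> z \in S) -> x \in S ->
  path (induced_rel e S') x p -> path (induced_rel e S) x p && (last x p \in S).
Proof.
move=> cl; elim: p x => [|z p IH] x xS /=; first by rewrite xS.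
case/andP => /and3P[_ zS' exz] pp.
have zS : z \in S := cl _ _ xS zS' exz.
by have := IH _ zS pp; rewrite /= -!andbA; move=> ->; rewrite xS zS exz.
Qed.

Lemma comp_closed (T : finType) (e : rel T) (S S' : {set T}) x :
  S \subset S' -> (forall w z, w \in S -> z \in S' -> e w z -> z \in S) -> x \in S ->
  component e S' x = component e S x.
Proof.
move=> sub cl xS; apply/setP => y; rewrite !inE; apply/idP/idP.
- case/andP=> _ /connectP[p pp ->].
  have /andP[pp' lS] := path_in cl xS pp.
  by rewrite lS; apply/connectP; exists p.
- case/andP=> yS /connectP[p pp yl].
  rewrite (subsetP sub _ yS); apply/connectP; exists p => //.
  apply: sub_path pp => a b /and3P[aS bS eab].
  by rewrite /induced_rel /= (subsetP sub _ aS) (subsetP sub _ bS).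
Qed.

Lemma comp_full (T : finType) (e : rel T) (es : symmetric e) (C : {set T}) s :
  uniq s -> (forall x, (x \in s) = (x \in C)) ->
  (forall x y, x \in C -> y \in C -> e x y = consec s x y) ->
  forall x, x \in C -> component e C x = C.
Proof.
move=> us sC eC x xC; apply/setP=> y; rewrite inE; apply: andb_idr => yC.
case: s us sC eC => [|h t] us sC eC; first by move: xC; rewrite -sC.
have pth : path (induced_rel e C) h t.
  apply/(pathP h) => i lti.
  have aC : nth h (h :: t) i \in C by rewrite -sC mem_nth //= ltnS ltnW.
  have bC : nth h t i \in C by rewrite -sC inE mem_nth ?orbT.
  have ia : index (nth h (h :: t) i) (h :: t) = i.
    by apply: index_uniq => //=; rewrite ltnS ltnW.
  have ib : index (nth h t i) (h :: t) = i.+1.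
    by apply: (@index_uniq _ h i.+1 (h :: t)).
  by rewrite /induced_rel /= aC bC eC // consecE // !sC aC bC ia ib eqxx.
have hc : forall z, z \in C -> connect (induced_rel e C) h z.
  by move=> z; rewrite -sC; apply: path_connect.
have hs := sym_connect_sym (ir_sym C es).
by apply: (connect_trans (y:=h)); [rewrite hs; apply: hc | apply: hc].
Qed.

Lemma clcomp (T : finType) (e : rel T) (S : {set T}) x w z :
  w \in component e S x -> z \in S -> e w z -> z \in component e S x.
Proof.
rewrite !inE => /andP[wS cxw] zS ewz; rewrite zS /=.
apply: connect_trans cxw _; apply: connect1.
by rewrite /induced_rel /= wS zS.
Qed.

Lemma block (T : finType) (e : rel T) (es : symmetric e) (S S' C : {set T}) s t k x :
  S' \subset S ->
  (forall w z, w \in C -> z \in S -> e w z -> z \in C) ->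
  uniq s -> (forall y, (y \in s) = (y \in C)) ->
  (forall a b, a \in C -> b \in C -> e a b = consec s a b) ->
  uniq t -> {subset t <= s} -> (forall y, y \in t -> y \in S') ->
  (forall y, y \in t -> index y s = k + index y t) ->
  (forall z, z \in s -> z \notin t -> z \in S' -> (index z s).+1 < k \/ k + size t < index z s) ->
  x \in t ->
  is_path_graph e (component e S' x).
Proof.
move=> sub clC us sC eC ut ts tS' idx bnd xt.
have tC : forall y, y \in t -> y \in C by move=> y yt; rewrite -sC ts.
set A := [set y | y \in t].
have eA : forall a b, a \in A -> b \in A -> e a b = consec t a b.
  move=> a b; rewrite !inE => at_ bt.
  rewrite eC ?tC // !consecE // (ts a at_) (ts b bt) at_ bt /= !idx //.
  by rewrite -!addnS !eqn_add2l.
have clA : forall w z, w \in A -> z \in S' -> e w z -> z \in A.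
  move=> w z; rewrite !inE => wt zS' ewz.
  have zC := clC w z (tC _ wt) (subsetP sub _ zS') ewz.
  apply/negPn/negP => zt.
  have := eC w z (tC _ wt) zC; rewrite ewz consecE // => /esym/and3P[_ _ H].
  have zs : z \in s by rewrite sC.
  have := bnd z zs zt zS'.
  have := idx w wt; have := index_mem w t; rewrite wt.
  by case/orP: H => /eqP; lia.
have AS' : A \subset S' by apply/subsetP=> y; rewrite inE; apply: tS'.
rewrite (comp_closed AS' clA) ?inE //.
rewrite (comp_full es ut _ eA) ?inE //; last by move=> y; rewrite inE.
by exists t; split => // y; rewrite inE.
Qed.

Lemma lf_del (T : finType) (e : rel T) (es : symmetric e) (S : {set T}) u :
  induced_linear_forest e S -> induced_linear_forest e (S :\ u).
Proof.
move=> lf x; rewrite !inE => /andP[xu xS].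
have [s [us sC eC]] := lf x xS.
have clC := @clcomp T e S x.
have sub : S :\ u \subset S by apply: subD1set.
have xs : x \in s by rewrite sC inE xS connect0.
have sS : forall y, y \in s -> y \in S by move=> y; rewrite sC inE => /andP[].
case: (boolP (u \in s)) => us'; last first.
  apply: (block es (S := S) (t := s) (k := 0) sub clC us sC eC us) => //.
  by move=> y ys; rewrite !inE sS // andbT; apply: contraNneq us' => <-.
  by move=> z ->.
case/splitPr: us' us sC eC xs sS => s1 s2 us sC eC xs sS.
have u12 := us; rewrite cat_uniq /= negb_or in u12.
case/and4P: u12 => us1 /andP[u1 h12] u2 us2.
have d12 : forall y, y \in s2 -> y \notin s1.
  by move=> y ys2; apply: contra h12 => ys1; apply/hasP; exists y.
rewrite mem_cat inE (negbTE xu) /= in xs.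
case/orP: xs => xs.
- apply: (block es (S := S) (t := s1) (k := 0) sub clC us sC eC us1) => //.
  + by move=> y ys; rewrite mem_cat ys.
  + move=> y ys; rewrite !inE sS ?mem_cat ?ys // andbT.
    by apply: contraNneq u1 => <-.
  + by move=> y ys; rewrite index_cat ys.
  + move=> z zs zs1; rewrite !inE => /andP[zu _]; right.
    rewrite index_cat (negbTE zs1) /= eq_sym (negbTE zu) add0n; lia.
- apply: (block es (S := S) (t := s2) (k := (size s1).+1) sub clC us sC eC us2) => //.
  + by move=> y ys; rewrite mem_cat inE ys !orbT.
  + move=> y ys; rewrite !inE sS ?mem_cat ?inE ?ys ?orbT // andbT.
    by apply: contraNneq u2 => <-.
  + move=> y ys; rewrite index_cat (negbTE (d12 _ ys)) /=.
    have -> : (u == y) = false by apply/negbTE; apply: contraNneq u2 => ->.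
    by rewrite addSn addnS.
  + move=> z zs zs2; rewrite !inE => /andP[zu _]; left.
    move: zs; rewrite mem_cat inE (negbTE zs2) (negbTE zu) /= orbF => zs1.
    by rewrite index_cat zs1 ltnS index_mem.
Qed.

Lemma lf_add_iso (T : finType) (e : rel T) (es : symmetric e) (ei : irreflexive e)
    (S : {set T}) v :
  induced_linear_forest e S -> (forall w, w \in S -> e v w = false) ->
  induced_linear_forest e (v |: S).
Proof.
move=> lf nv x; rewrite in_setU1 => /orP[/eqP->|xS].
  apply: (block es (S := v |: S) (C := [set v]) (s := [:: v]) (t := [:: v]) (k := 0)) => //.
  - move=> w z; rewrite in_set1 => /eqP->; rewrite in_setU1 => /orP[/eqP->|zS].
      by rewrite in_set1.
    by rewrite nv.
  - by move=> y; rewrite !inE.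
  - by move=> a b; rewrite !inE => /eqP-> /eqP->; rewrite ei.
  - by move=> y; rewrite !inE => ->.
  - by move=> z ->.
  - by rewrite inE.
have [s [us sC eC]] := lf x xS.
have sS : forall y, y \in s -> y \in S by move=> y; rewrite sC inE => /andP[].
apply: (block es (S := v |: S) (t := s) (k := 0) _ _ us sC eC us) => //.
- move=> w z wC; rewrite in_setU1 => /orP[/eqP->|zS] ewz.
    have wS : w \in S by rewrite -sC in wC; apply: sS.
    by rewrite es nv in ewz.
  exact: clcomp wC zS ewz.
- by move=> y ys; rewrite in_setU1 sS ?orbT.
- by move=> z ->.
- by rewrite sC inE xS connect0.
Qed.

Lemma lf_add_pend (T : finType) (e : rel T) (es : symmetric e) (ei : irreflexive e)
    (S : {set T}) u v :
  induced_linear_forest e S -> u \in S -> v \notin S ->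
  (forall w, w \in S -> e u w = false) -> (forall w, w \in S -> e v w = (w == u)) ->
  induced_linear_forest e (v |: S).
Proof.
move=> lf uS vS iu nv.
have uv : u != v by apply: contraNneq vS => <-.
have euv : e u v by rewrite es nv ?eqxx.
move=> x xS'.
case: (boolP (x \in [set u; v])) => xP.
  apply: (block es (S := v |: S) (C := [set u; v]) (s := [:: u; v]) (t := [:: u; v]) (k := 0)) => //.
  - move=> w z; rewrite !inE => /orP[]/eqP-> /orP[/eqP->|zS] ewz; rewrite ?eqxx ?orbT //.
      by rewrite iu in ewz.
    by rewrite nv // in ewz; rewrite ewz.
  - by rewrite /= inE andbT.
  - by move=> y; rewrite !inE.
  - move=> a b; rewrite !inE => /orP[]/eqP-> /orP[]/eqP->;
    by rewrite /consec /= !xpair_eqE ?eqxx ?ei ?euv ?(es v u) ?euv ?(eq_sym v u) ?(negbTE uv) ?orbT.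
  - by rewrite /= inE andbT.
  - by move=> y; rewrite !inE => /orP[]/eqP->; rewrite ?uS ?orbT ?eqxx.
  - by move=> z ->.
  - by move: xP; rewrite !inE.
move: xS' xP; rewrite !inE negb_or => /orP[/eqP xv'|xS] /andP[xu xv]; first by rewrite xv' eqxx in xv.
have sub : S :\ u \subset S by apply: subD1set.
have clS : forall w z, w \in S :\ u -> z \in S -> e w z -> z \in S :\ u.
  move=> w z; rewrite !inE => /andP[wu wS] zS ewz; rewrite zS andbT.
  by apply: contraTneq ewz => ->; rewrite es iu.
have xSu : x \in S :\ u by rewrite !inE xu.
have [s [us sC eC]] := lf x xS.
rewrite (comp_closed sub clS xSu) in sC eC.
have sS : forall y, y \in s -> y \in S :\ u by move=> y; rewrite sC inE => /andP[].
apply: (block es (S := v |: S) (t := s) (k := 0) _ _ us sC eC us) => //.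
- move=> w z wC; rewrite in_setU1 => /orP[/eqP->|zS] ewz.
    have /andP[wu wS] : (w != u) && (w \in S) by rewrite -in_setD1 sS // sC.
    by rewrite es nv // (negbTE wu) in ewz.
  rewrite -(comp_closed sub clS xSu) in wC *.
  exact: clcomp wC zS ewz.
- by move=> y ys; rewrite in_setU1; have := sS y ys; rewrite !inE => /andP[_ ->]; rewrite orbT.
- by move=> z ->.
- by rewrite sC inE xSu connect0.
Qed.

Lemma core (T : finType) (e : rel T) (es : symmetric e) (ei : irreflexive e)
    (R F : {set T}) v :
  good_choice e R F -> v \in R -> v \notin F -> 2 <= #|[set u in F | e v u]|.
Proof.
case=> FR lfF opt vR vF.
rewrite leqNgt; apply/negP => small.
set N := [set u in F | e v u] in small.
have bigger : forall L : {set T}, L \subset R -> induced_linear_forest e L -> #|L| = #|F|.+1 -> False.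
  move=> L LR lfL cL; have [c _] := opt L LR lfL; by rewrite cL ltnn in c.
have vFR : v |: F \subset R by rewrite subUset sub1set vR FR.
have cvF : #|v |: F| = #|F|.+1 by rewrite cardsU1 vF.
have : #|N| <= 1 by [].
rewrite leq_eqVlt ltnS leqn0 cards_eq0 => /orP[/cards1P[u Nu]|/eqP N0].
- have uN : u \in N by rewrite Nu set11.
  have /andP[uF evu] : (u \in F) && e v u by move: uN; rewrite inE.
  have nv : forall w, w \in F -> e v w = (w == u).
    move=> w wF; apply/idP/eqP => [evw|->//].
    have : w \in N by rewrite inE wF.
    by rewrite Nu => /set1P.
  case: (boolP [exists w in F, e u w]) => [/existsP[w /andP[wF euw]] | nex]; last first.
    have iu : forall w, w \in F -> e u w = false.
      move=> w wF; apply/negbTE; apply: contra nex => euw; by apply/existsP; exists w; rewrite wF.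
    exact: bigger _ vFR (lf_add_pend es ei lfF uF vF iu nv) cvF.
  set L := v |: (F :\ u).
  have nv' : forall w, w \in F :\ u -> e v w = false.
    by move=> w'; rewrite !inE => /andP[w'u w'F]; rewrite nv // (negbTE w'u).
  have lfL : induced_linear_forest e L := lf_add_iso es ei (@lf_del T e es F u lfF) nv'.
  have LR : L \subset R.
    by rewrite subUset sub1set vR (subset_trans (subD1set F u) FR).
  have vFu : v \notin F :\ u by rewrite !inE (negbTE vF) andbF.
  have cL : #|L| = #|F| by rewrite cardsU1 vFu (cardsD1 u F) uF.
  have [_ le] := opt L LR lfL.
  have := le cL.
  apply/negP; rewrite -ltnNge.
  apply: proper_card; apply/properP; split.
  - apply/subsetP => A; rewrite !inE => /existsP[x /existsP[y /and4P[/eqP-> xL yL exy]]].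
    have xv : x != v.
      apply: contraTneq exy => ->; move: yL; rewrite in_setU1 => /orP[/eqP->|yF].
        by rewrite ei.
      by rewrite nv'.
    have yv : y != v.
      apply: contraTneq exy => ->; move: xL; rewrite in_setU1 => /orP[/eqP->|xF].
        by rewrite ei.
      by rewrite es nv'.
    have xF : x \in F by move: xL; rewrite in_setU1 (negbTE xv) !inE => /andP[].
    have yF : y \in F by move: yL; rewrite in_setU1 (negbTE yv) !inE => /andP[].
    by apply/existsP; exists x; apply/existsP; exists y; rewrite eqxx xF yF exy.
  - exists [set u; w].
      by rewrite inE; apply/existsP; exists u; apply/existsP; exists w; rewrite eqxx uF wF euw.
    rewrite inE; apply/negP => /existsP[x /existsP[y /and4P[/eqP E xL yL _]]].
    have : u \in [set x; y] by rewrite -E set21.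
    rewrite !inE => /orP[]/eqP Ex; [move: xL | move: yL];
      rewrite -Ex in_setU1 in_setD1 eqxx /= orbF => /eqP uv; by rewrite -uv uF in vF.
- have nv : forall w, w \in F -> e v w = false.
    move=> w wF; apply/negbTE/negP => evw.
    have : w \in N by rewrite inE wF.
    by rewrite N0 inE.
  exact: bigger _ vFR (lf_add_iso es ei lfF nv) cvF.
Qed.

(* Indices are 0-based: nth set0 Fs i is F_(i+1). *)
Theorem claim1 (T : finType) (e : rel T) (e_sym : symmetric e)
    (e_irr : irreflexive e) (Fs : seq {set T}) :
  greedy_partition e Fs ->
  forall i j, j < i -> i < size Fs ->
  forall v, v \in nth set0 Fs i ->
    2 <= #|[set u in nth set0 Fs j | e v u]|.
Proof.
case=> gp _ i j ji iS v vi.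
have [_ [FiR _ _]] := gp i iS.
have [_ gj] := gp j (ltn_trans ji iS).
have vRi := subsetP FiR v vi.
move: vRi; rewrite /remaining in_setC bigcup_seq => vRi.
apply: (core e_sym e_irr gj).
- rewrite /remaining in_setC bigcup_seq; apply: contra vRi => /bigcupP[F Fj vF].
  apply/bigcupP; exists F => //.
  move: Fj; rewrite -(minn_idPl (ltnW ji)) take_min; apply: mem_take.
- apply: contra vRi => vj; apply/bigcupP; exists (nth set0 Fs j) => //.
  rewrite -(nth_take _ ji) mem_nth // size_takel //; exact: ltnW.
Qed.
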